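(* Let $(X,\le)$ be a non-empty strictly inductive poset, $f:X\to X$ and $a_0\in X$, let $(a_k)_k$ be the transfinite sequence of iterates of $f$ from $a_0$, $A=\{a_k\mid k\text{ an ordinal}\}$, and let $N$ be the smallest subset of $X$ containing $a_0$, closed under $f$, and closed under non-empty least upper bounds. If the sequence $(a_k)_k$ is monotone (i.e. $a_k\le a_l$ whenever $k\le l$), then $N\subseteq A$.
   Context: A poset is strictly inductive if every non-empty chain has a least upper bound $\mathrm{lub}$ in $X$. The transfinite iterates are defined by $a_0$ given, $a_{k+1}=f(a_k)$, and $a_l=\mathrm{lub}\{a_k\mid k<l\}$ for limit ordinals $l$. A set $Z\subseteq X$ is closed under $f$ if $f(z)\in Z$ for all $z\in Z$, and closed under non-empty least upper bounds if for every non-empty $P\subseteq Z$, $\mathrm{lub}(P)$ exists and belongs to $Z$. *)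

(* Defs.v *)
From Stdlib Require Import Classical.

Set Implicit Arguments.

Section Poset.
Variables (X : Type) (le : X -> X -> Prop).

Definition is_poset : Prop :=
  (forall x, le x x) /\
  (forall x y, le x y -> le y x -> x = y) /\
  (forall x y z, le x y -> le y z -> le x z).

Definition is_lub (P : X -> Prop) (x : X) : Prop :=
  (forall p, P p -> le p x) /\
  (forall u, (forall p, P p -> le p u) -> le x u).

Definition is_chain (P : X -> Prop) : Prop :=
  forall x y, P x -> P y -> le x y \/ le y x.

Definition strictly_inductive : Prop :=
  forall P : X -> Prop, (exists x, P x) -> is_chain P -> exists l, is_lub P l.

Definition closed_under_f (f : X -> X) (Z : X -> Prop) : Prop :=
  forall z, Z z -> Z (f z).

Definition closed_under_lubs (Z : X -> Prop) : Prop :=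
  forall P : X -> Prop, (exists x, P x) -> (forall x, P x -> Z x) ->
    exists l, is_lub P l /\ Z l.
End Poset.

(* A well-ordered index type (W, lt): strict total well-founded order.
   Every ordinal (with its initial segment) is such a W and every such W is
   isomorphic to an ordinal. *)
Definition well_order (W : Type) (lt : W -> W -> Prop) : Prop :=
  (forall k, ~ lt k k) /\
  (forall i j k, lt i j -> lt j k -> lt i k) /\
  (forall i j, lt i j \/ i = j \/ lt j i) /\
  well_founded lt.

(* a : W -> X is the transfinite sequence of iterates of f from a0, indexed
   by the well-order (W, lt):
   a_0 = a0, a_{k+1} = f a_k, a_l = lub {a_k | k < l} for limit l. *)
Definition transfinite_iterates (X : Type) (le : X -> X -> Prop)
    (f : X -> X) (a0 : X) (W : Type) (lt : W -> W -> Prop) (a : W -> X) : Prop :=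
  forall k : W,
    ((forall j, ~ lt j k) -> a k = a0) /\
    (forall j, lt j k -> (forall m, ~ (lt j m /\ lt m k)) -> a k = f (a j)) /\
    ((exists j, lt j k) ->
     (forall j, lt j k -> exists m, lt j m /\ lt m k) ->
     is_lub le (fun x => exists j, lt j k /\ x = a j) (a k)).

Definition iterates_monotone (X : Type) (le : X -> X -> Prop)
    (f : X -> X) (a0 : X) : Prop :=
  forall (W : Type) (lt : W -> W -> Prop) (a : W -> X),
    well_order lt -> transfinite_iterates le f a0 lt a ->
    forall k l, (k = l \/ lt k l) -> le (a k) (a l).

Definition iterates_set (X : Type) (le : X -> X -> Prop)
    (f : X -> X) (a0 : X) : X -> Prop :=
  fun x => exists (W : Type) (lt : W -> W -> Prop) (a : W -> X) (k : W),
    well_order lt /\ transfinite_iterates le f a0 lt a /\ a k = x.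

(* Main.v *)
Require Import Defs.
From Stdlib Require Import Classical ProofIrrelevance.

Set Implicit Arguments.
Section S.
Variables (X : Type) (le : X -> X -> Prop) (f : X -> X) (a0 : X).
Hypothesis Hpo : is_poset le.
Hypothesis Hmon : iterates_monotone le f a0.

Definition slt x y := le x y /\ x <> y.

Lemma refl x : le x x. Proof. apply Hpo. Qed.
Lemma antis x y : le x y -> le y x -> x = y. Proof. apply Hpo. Qed.
Lemma trans x y z : le x y -> le y z -> le x z. Proof. apply Hpo. Qed.

Lemma cases (W : Type) (r : W -> W -> Prop) k :
  (forall j, ~ r j k) \/ (exists j, r j k /\ forall m, ~(r j m /\ r m k)) \/
  ((exists j, r j k) /\ forall j, r j k -> exists m, r j m /\ r m k).
Proof.
  destruct (classic (exists j, r j k)) as [[j Hj]|Hn].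
  - right. destruct (classic (exists j, r j k /\ forall m, ~(r j m /\ r m k))) as [H|H].
    + left; exact H.
    + right; split; [exists j; exact Hj|]. intros j' Hj'.
      apply NNPP; intro Hc. apply H. exists j'. split; auto.
      intros m Hm. apply Hc. exists m; exact Hm.
  - left. intros j Hj. apply Hn. exists j; exact Hj.
Qed.

Lemma minexists (W : Type) (r : W -> W -> Prop) : well_order r ->
  forall m, exists m0, (forall j, ~ r j m0) /\ (m0 = m \/ r m0 m).
Proof.
  intros (Hirr & Htr & Htot & Hwf) m. induction m as [m IH] using (well_founded_ind Hwf).
  destruct (classic (exists j, r j m)) as [[j Hj]|Hn].
  - destruct (IH j Hj) as [m0 [H1 [H2|H2]]]; exists m0; split; auto; right.
    subst; auto. eauto.
  - exists m; split; auto. intros j Hj; apply Hn; eauto.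
Qed.

Lemma mono (W : Type) (r : W -> W -> Prop) a : well_order r ->
  transfinite_iterates le f a0 r a -> forall k m, r k m -> le (a k) (a m).
Proof. intros Hw Ht k m H. apply (Hmon Hw Ht); auto. Qed.

Lemma base (W : Type) (r : W -> W -> Prop) a : well_order r ->
  transfinite_iterates le f a0 r a -> forall m, le a0 (a m).
Proof.
  intros Hw Ht m. destruct (minexists Hw m) as [m0 [H1 H2]].
  rewrite <- (proj1 (Ht m0) H1). apply (Hmon Hw Ht); auto.
Qed.

Definition Sprop x y := (le x y \/ le y x) /\ (slt x y -> le (f x) y) /\ (slt y x -> le (f y) x).

Lemma compare (W : Type) (r : W -> W -> Prop) a (V : Type) (s : V -> V -> Prop) b :
  well_order r -> transfinite_iterates le f a0 r a ->
  well_order s -> transfinite_iterates le f a0 s b ->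
  forall k m, Sprop (a k) (b m).
Proof.
  intros Hw Ht Hv Hs.
  pose proof Hw as (_ & _ & _ & wfW). pose proof Hv as (_ & _ & _ & wfV).
  intro k; induction k as [k IHk] using (well_founded_ind wfW).
  intro m; induction m as [m IHm] using (well_founded_ind wfV).
  destruct (Ht k) as [Ha0 [Has Hal]]. destruct (Hs m) as [Hb0 [Hbs Hbl]].
  assert (C : le (a k) (b m) \/ le (b m) (a k)).
  { destruct (cases s m) as [Hm|[[n [Hn Hn']]|[Hne Hlim]]].
    - right. rewrite (Hb0 Hm). apply (base Hw Ht).
    - destruct (cases r k) as [Hk|[[j [Hj Hj']]|[Hke Hklim]]].
      + left. rewrite (Ha0 Hk). apply (base Hv Hs).
      + destruct (IHk j Hj n) as [[H1|H1] [H2 H3]].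
        * destruct (classic (a j = b n)) as [E|E].
          { rewrite (Has j Hj Hj'), (Hbs n Hn Hn'), E; left; apply refl. }
          left. rewrite (Has j Hj Hj'). apply trans with (b n). apply H2; split; auto. apply (mono Hv Hs _ _ Hn).
        * destruct (classic (a j = b n)) as [E|E].
          { rewrite (Has j Hj Hj'), (Hbs n Hn Hn'), E; left; apply refl. }
          right. rewrite (Hbs n Hn Hn'). apply trans with (a j). apply H3; split; auto. apply (mono Hw Ht _ _ Hj).
      + destruct (classic (forall j, r j k -> le (a j) (b m))) as [Hall|Hex].
        * left. apply (proj2 (Hal Hke Hklim)). intros p [j [Hj ->]]. auto.
        * apply not_all_ex_not in Hex. destruct Hex as [j Hj].
          apply imply_to_and in Hj. destruct Hj as [Hj Hnle].
          destruct (IHk j Hj m) as [[H1|H1] _]; [contradiction|].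
          right. apply trans with (a j); auto. apply (mono Hw Ht _ _ Hj).
    - destruct (classic (forall n, s n m -> le (b n) (a k))) as [Hall|Hex].
      + right. apply (proj2 (Hbl Hne Hlim)). intros p [n [Hn ->]]. auto.
      + apply not_all_ex_not in Hex. destruct Hex as [n Hn].
        apply imply_to_and in Hn. destruct Hn as [Hn Hnle].
        destruct (IHm n Hn) as [[H1|H1] _]; [|contradiction].
        left. apply trans with (b n); auto. apply (mono Hv Hs _ _ Hn). }
  split; [exact C|split].
  - intros [Hle Hneq].
    destruct (cases s m) as [Hm|[[n [Hn Hn']]|[Hne Hlim]]].
    + exfalso. apply Hneq. apply antis; auto. rewrite (Hb0 Hm). apply (base Hw Ht).
    + 
      destruct (IHm n Hn) as [[H1|H1] [H2 H3]].
      * destruct (classic (a k = b n)) as [E|E].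
        { rewrite (Hbs n Hn Hn'), E; apply refl. }
        apply trans with (b n). apply H2; split; auto. apply (mono Hv Hs _ _ Hn).
      * destruct (classic (a k = b n)) as [E|E].
        { rewrite (Hbs n Hn Hn'), E; apply refl. }
        exfalso. apply Hneq. apply antis; auto. rewrite (Hbs n Hn Hn').
        apply H3; split; auto.
    + destruct (classic (forall n, s n m -> le (b n) (a k))) as [Hall|Hex].
      * exfalso. apply Hneq. apply antis; auto. apply (proj2 (Hbl Hne Hlim)).
        intros p [n [Hn ->]]. auto.
      * apply not_all_ex_not in Hex. destruct Hex as [n Hn].
        apply imply_to_and in Hn. destruct Hn as [Hn Hnle].
        destruct (IHm n Hn) as [[H1|H1] [H2 _]]; [|contradiction].
        apply trans with (b n). apply H2; split; auto. intro E; apply Hnle; rewrite <- E; apply refl.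
        apply (mono Hv Hs _ _ Hn).
  - intros [Hle Hneq].
    destruct (cases r k) as [Hk|[[j [Hj Hj']]|[Hke Hklim]]].
    + exfalso. apply Hneq. apply antis; auto. rewrite (Ha0 Hk). apply (base Hv Hs).
    + destruct (IHk j Hj m) as [[H1|H1] [H2 H3]].
      * destruct (classic (a j = b m)) as [E|E].
        { rewrite (Has j Hj Hj'), E; apply refl. }
        exfalso. apply Hneq. apply antis; auto. rewrite (Has j Hj Hj').
        apply H2; split; auto.
      * destruct (classic (a j = b m)) as [E|E].
        { rewrite (Has j Hj Hj'), E; apply refl. }
        apply trans with (a j). apply H3; split; auto. apply (mono Hw Ht _ _ Hj).
    + destruct (classic (forall j, r j k -> le (a j) (b m))) as [Hall|Hex].
      * exfalso. apply Hneq. apply antis; auto. apply (proj2 (Hal Hke Hklim)).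
        intros p [j [Hj ->]]. auto.
      * apply not_all_ex_not in Hex. destruct Hex as [j Hj].
        apply imply_to_and in Hj. destruct Hj as [Hj Hnle].
        destruct (IHk j Hj m) as [[H1|H1] [_ H3]]; [contradiction|].
        apply trans with (a j). apply H3; split; auto. intro E; apply Hnle; rewrite E; apply refl.
        apply (mono Hw Ht _ _ Hj).
Qed.


Definition Aset := iterates_set le f a0.

Lemma A_chain x y : Aset x -> Aset y -> le x y \/ le y x.
Proof.
  intros [W [r [a [k [Hw [Ht <-]]]]]] [V [s [b [m [Hv [Hs <-]]]]]].
  apply (compare Hw Ht Hv Hs k m).
Qed.

Lemma A_f x y : Aset x -> Aset y -> slt x y -> le (f x) y.
Proof.
  intros [W [r [a [k [Hw [Ht <-]]]]]] [V [s [b [m [Hv [Hs <-]]]]]].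
  apply (compare Hw Ht Hv Hs k m).
Qed.

Lemma A_base x : Aset x -> le a0 x.
Proof. intros [W [r [a [k [Hw [Ht <-]]]]]]. apply (base Hw Ht). Qed.

Lemma A_a0 x : Aset x -> Aset a0.
Proof.
  intros [W [r [a [k [Hw [Ht <-]]]]]].
  destruct (minexists Hw k) as [m0 [H1 _]].
  exists W, r, a, m0. split; auto. split; auto. apply (proj1 (Ht m0) H1).
Qed.

Lemma A_at (W : Type) (r : W -> W -> Prop) a : well_order r ->
  transfinite_iterates le f a0 r a -> forall k, Aset (a k).
Proof. intros Hw Ht k. exists W, r, a, k. auto. Qed.

Lemma slt_trans x y z : slt x y -> slt y z -> slt x z.
Proof.
  intros [H1 H2] [H3 H4]. split. apply trans with y; auto.
  intro E; subst. apply H2. apply antis; auto.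
Qed.

Lemma I1 y : Aset y -> (forall z, Aset z -> ~ slt z y) -> y = a0.
Proof.
  intros Hy H. destruct (classic (a0 = y)) as [E|E]; auto.
  exfalso. apply (H a0 (A_a0 Hy)). split; auto. apply A_base; auto.
Qed.

Lemma notle_slt x y : Aset x -> Aset y -> ~ le x y -> slt y x.
Proof.
  intros Hx Hy Hn. destruct (A_chain Hx Hy) as [H|H]; [contradiction|].
  split; auto. intro E; subst; apply Hn; apply refl.
Qed.

Lemma I2 (W : Type) (r : W -> W -> Prop) a : well_order r ->
  transfinite_iterates le f a0 r a -> forall k z, Aset z -> slt z (a k) ->
  (forall w, Aset w -> ~(slt z w /\ slt w (a k))) -> a k = f z.
Proof.
  intros Hw Ht. pose proof Hw as (_ & _ & _ & wfW).
  intro k; induction k as [k IHk] using (well_founded_ind wfW).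
  intros z Hz Hzk Hbet.
  destruct (Ht k) as [Ha0 [Has Hal]].
  destruct (cases r k) as [Hk|[[j [Hj Hj']]|[Hke Hklim]]].
  - exfalso. destruct Hzk as [H1 H2]. apply H2. apply antis; auto.
    rewrite (Ha0 Hk). apply A_base; auto.
  - pose proof (A_at Hw Ht j) as Haj.
    destruct (classic (z = a j)) as [E|E].
    { subst. apply (Has j Hj Hj'). }
    destruct (A_chain Hz Haj) as [H|H].
    + destruct (classic (a j = a k)) as [E2|E2].
      * rewrite <- E2. apply IHk; auto. rewrite E2; auto.
        intros w Hw' [H1 H2]. apply (Hbet w Hw'). split; auto. rewrite <- E2; auto.
      * exfalso. apply (Hbet (a j) Haj). split. split; auto.
        split; auto. apply (mono Hw Ht _ _ Hj).
    + exfalso. assert (le (f (a j)) z). apply A_f; auto. split; auto.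
      rewrite <- (Has j Hj Hj') in H0. destruct Hzk as [H1 H2]. apply H2; apply antis; auto.
  - destruct (classic (forall j, r j k -> le (a j) z)) as [Hall|Hex].
    + exfalso. destruct Hzk as [H1 H2]. apply H2; apply antis; auto.
      apply (proj2 (Hal Hke Hklim)). intros p [j [Hj ->]]; auto.
    + apply not_all_ex_not in Hex. destruct Hex as [j Hj].
      apply imply_to_and in Hj. destruct Hj as [Hj Hnle].
      pose proof (A_at Hw Ht j) as Haj.
      pose proof (notle_slt Haj Hz Hnle) as Hzj.
      destruct (classic (a j = a k)) as [E2|E2].
      * rewrite <- E2. apply IHk; auto. 
        intros w Hw' [H1 H2]. apply (Hbet w Hw'). split; auto. rewrite <- E2; auto.
      * exfalso. apply (Hbet (a j) Haj). split; auto.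
        split; auto. apply (mono Hw Ht _ _ Hj).
Qed.

Lemma I3 (W : Type) (r : W -> W -> Prop) a : well_order r ->
  transfinite_iterates le f a0 r a -> forall k,
  (exists z, Aset z /\ slt z (a k)) ->
  (forall z, Aset z -> slt z (a k) -> exists w, Aset w /\ slt z w /\ slt w (a k)) ->
  forall u, (forall z, Aset z -> slt z (a k) -> le z u) -> le (a k) u.
Proof.
  intros Hw Ht. pose proof Hw as (_ & _ & _ & wfW).
  intro k; induction k as [k IHk] using (well_founded_ind wfW).
  intros [z [Hz Hzk]] Hbet u Hu.
  destruct (Ht k) as [Ha0 [Has Hal]].
  destruct (cases r k) as [Hk|[[j [Hj Hj']]|[Hke Hklim]]].
  - exfalso. destruct Hzk as [H1 H2]. apply H2. apply antis; auto.
    rewrite (Ha0 Hk). apply A_base; auto.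
  - pose proof (A_at Hw Ht j) as Haj.
    destruct (classic (a j = a k)) as [E2|E2].
    + rewrite <- E2. apply IHk; auto; rewrite E2; eauto.
    + exfalso. destruct (Hbet (a j) Haj) as [w [Hw' [H1 H2]]].
      split; auto. apply (mono Hw Ht _ _ Hj).
      assert (le (f (a j)) w) by (apply A_f; auto).
      rewrite <- (Has j Hj Hj') in H. destruct H2 as [H3 H4]. apply H4; apply antis; auto.
  - destruct (classic (exists j, r j k /\ a j = a k)) as [[j [Hj E2]]|Hn].
    + rewrite <- E2. apply IHk; auto; rewrite E2; eauto.
    + apply (proj2 (Hal Hke Hklim)). intros p [j [Hj ->]].
      apply Hu. apply (A_at Hw Ht). split. apply (mono Hw Ht _ _ Hj).
      intro E; apply Hn; eauto.
Qed.

Lemma Seg (W : Type) (r : W -> W -> Prop) a : well_order r ->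
  transfinite_iterates le f a0 r a -> forall k z, Aset z -> slt z (a k) ->
  exists j, r j k /\ a j = z.
Proof.
  intros Hw Ht. pose proof Hw as (_ & Htr & _ & wfW).
  intro k; induction k as [k IHk] using (well_founded_ind wfW).
  intros z Hz Hzk.
  destruct (Ht k) as [Ha0 [Has Hal]].
  destruct (cases r k) as [Hk|[[j [Hj Hj']]|[Hke Hklim]]].
  - exfalso. destruct Hzk as [H1 H2]. apply H2. apply antis; auto.
    rewrite (Ha0 Hk). apply A_base; auto.
  - pose proof (A_at Hw Ht j) as Haj.
    destruct (classic (z = a j)) as [E|E].
    { exists j; auto. }
    destruct (A_chain Hz Haj) as [H|H].
    + destruct (IHk j Hj z Hz) as [j0 [H1 H2]]. split; auto.
      exists j0; split; eauto.
    + exfalso. assert (le (f (a j)) z). apply A_f; auto. split; auto.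
      rewrite <- (Has j Hj Hj') in H0. destruct Hzk as [H1 H2]. apply H2; apply antis; auto.
  - destruct (classic (forall j, r j k -> le (a j) z)) as [Hall|Hex].
    + exfalso. destruct Hzk as [H1 H2]. apply H2; apply antis; auto.
      apply (proj2 (Hal Hke Hklim)). intros p [j [Hj ->]]; auto.
    + apply not_all_ex_not in Hex. destruct Hex as [j Hj].
      apply imply_to_and in Hj. destruct Hj as [Hj Hnle].
      pose proof (A_at Hw Ht j) as Haj.
      destruct (IHk j Hj z Hz (notle_slt Haj Hz Hnle)) as [j0 [H1 H2]].
      exists j0; split; eauto.
Qed.

Definition RA u v := Aset u /\ slt u v.

Lemma A_acc y : Aset y -> Acc RA y.
Proof.
  intros [W [r [a [k [Hw [Ht <-]]]]]].
  pose proof Hw as (_ & _ & _ & wfW).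
  induction k as [k IHk] using (well_founded_ind wfW).
  constructor. intros z [Hz Hzk].
  destruct (Seg Hw Ht k Hz Hzk) as [j [Hj <-]]. auto.
Qed.


Lemma lub_ext (P Q : X -> Prop) l : (forall x, P x <-> Q x) -> is_lub le P l -> is_lub le Q l.
Proof.
  intros HPQ [H1 H2]. split.
  - intros p Hp. apply H1. apply HPQ; auto.
  - intros u Hu. apply H2. intros p Hp. apply Hu. apply HPQ; auto.
Qed.

Lemma I2' y z : Aset y -> Aset z -> slt z y ->
  (forall w, Aset w -> ~(slt z w /\ slt w y)) -> y = f z.
Proof.
  intros [W [r [a [k [Hw [Ht <-]]]]]]. intros. eapply I2; eauto.
Qed.

Lemma I3' y : Aset y -> (exists z, Aset z /\ slt z y) ->
  (forall z, Aset z -> slt z y -> exists w, Aset w /\ slt z w /\ slt w y) ->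
  is_lub le (fun z => Aset z /\ slt z y) y.
Proof.
  intros [W [r [a [k [Hw [Ht <-]]]]]] H1 H2. split.
  - intros p [_ [Hp _]]; auto.
  - intros u Hu. apply (I3 Hw Ht k H1 H2). intros z Hz Hzk. apply Hu; auto.
Qed.

Section Gen.
Variable D : X -> Prop.
Hypothesis HD : forall y, D y -> Aset y.
Hypothesis Hdc : forall y z, D y -> Aset z -> slt z y -> D z.
Variable t : X.
Hypothesis T1 : (forall y, ~ D y) -> t = a0.
Hypothesis T2 : forall v, D v -> (forall w, D w -> ~ slt v w) -> t = f v.
Hypothesis T3 : (exists y, D y) -> (forall v, D v -> exists w, D w /\ slt v w) -> is_lub le D t.

Definition GW := option {y : X | D y}.
Definition glt (p q : GW) : Prop :=
  match p, q with
  | Some u, Some v => slt (proj1_sig u) (proj1_sig v)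
  | Some _, None => True
  | None, _ => False
  end.
Definition gseq (p : GW) : X := match p with Some u => proj1_sig u | None => t end.

Lemma gwo : well_order glt.
Proof.
  split; [|split; [|split]].
  - intros [[y Hy]|]; simpl; auto. intros [_ H]; auto.
  - intros [[x Hx]|] [[y Hy]|] [[z Hz]|]; simpl; auto; try tauto.
    apply slt_trans.
  - intros [[x Hx]|] [[y Hy]|]; simpl; auto.
    destruct (classic (x = y)) as [E|E].
    + subst. right; left. f_equal. f_equal. apply proof_irrelevance.
    + destruct (A_chain (HD Hx) (HD Hy)) as [H|H].
      * left; split; auto.
      * right; right; split; auto.
  - assert (HS : forall u : {y : X | D y}, Acc glt (Some u)).
    { intros [y Hy]. pose proof (A_acc (HD Hy)) as Hacc. revert Hy.
      induction Hacc as [y _ IH]. intros Hy. constructor.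
      intros [[z Hz]|] Hlt; simpl in Hlt; [|contradiction].
      apply IH; auto. split; auto. }
    intros [u|]; auto. constructor. intros [v|] Hlt; simpl in Hlt; [auto|contradiction].
Qed.

Lemma gti : transfinite_iterates le f a0 glt gseq.
Proof.
  intros [[y Hy]|]; simpl.
  - split; [|split].
    + intros Hn. apply I1. apply HD; auto. intros z Hz Hzy.
      apply (Hn (Some (exist _ z (Hdc Hy Hz Hzy)))). simpl; auto.
    + intros [[z Hz]|] Hlt Hbet; simpl in Hlt; [|contradiction]. simpl.
      apply I2'; auto. intros w Hw [H1 H2].
      apply (Hbet (Some (exist _ w (Hdc Hy Hw H2)))). simpl; auto.
    + intros [[j|] Hj] Hlim; simpl in Hj; [|contradiction].
      apply lub_ext with (P := fun z => Aset z /\ slt z y).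
      * intros x; split.
        -- intros [Hx Hxy]. exists (Some (exist _ x (Hdc Hy Hx Hxy))). simpl; auto.
        -- intros [[[v Hv]|] [Hv' ->]]; simpl in *; [|contradiction]. split; auto.
      * apply I3'. apply HD; auto.
        exists (proj1_sig j). split; auto. destruct j; simpl; auto.
        intros z Hz Hzy. destruct (Hlim (Some (exist _ z (Hdc Hy Hz Hzy)))) as [[[w Hw]|] [H1 H2]];
          simpl in *; auto; try contradiction. exists w; auto.
  - split; [|split].
    + intros Hn. apply T1. intros y Hy. apply (Hn (Some (exist _ y Hy))). simpl; auto.
    + intros [[v Hv]|] Hlt Hbet; simpl in *; [|contradiction].
      apply T2; auto. intros w Hw Hvw. apply (Hbet (Some (exist _ w Hw))). simpl; auto.
    + intros [[[j Hj]|] Hjl] Hlim; simpl in Hjl; [|contradiction].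
      apply lub_ext with (P := D).
      * intros x; split.
        -- intros Hx. exists (Some (exist _ x Hx)). simpl; auto.
        -- intros [[[v Hv]|] [Hvl ->]]; simpl in *; [auto|contradiction].
      * apply T3. exists j; auto.
        intros v Hv. destruct (Hlim (Some (exist _ v Hv))) as [[[w Hw]|] [H1 H2]];
          simpl in *; auto; try contradiction. exists w; auto.
Qed.

Lemma gen_A : Aset t.
Proof. exists GW, glt, gseq, None. split. apply gwo. split. apply gti. reflexivity. Qed.
End Gen.


Lemma A_a0' : Aset a0.
Proof.
  apply (@gen_A (fun _ => False)); try tauto.
  intros [y []].
Qed.

Lemma A_fclosed y : Aset y -> Aset (f y).
Proof.
  intros Hy. apply (@gen_A (fun z => Aset z /\ le z y)).
  - intros z [Hz _]; auto.
  - intros z w [Hz Hzy] Hw [H1 _]. split; auto. apply trans with z; auto.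
  - intros Hn. exfalso. apply (Hn y). split; auto. apply refl.
  - intros v [Hv Hvy] Hmax. destruct (classic (v = y)) as [->|E]; auto.
    exfalso. apply (Hmax y). split; auto. apply refl. split; auto.
  - intros _ Hlim. exfalso. destruct (Hlim y) as [w [[Hw Hwy] [H1 H2]]]. split; auto. apply refl.
    apply H2; apply antis; auto.
Qed.

Lemma A_lubclosed : strictly_inductive le -> closed_under_lubs le Aset.
Proof.
  intros Hsi P Hne HP.
  destruct (Hsi P Hne) as [l Hl].
  { intros x y Hx Hy. apply A_chain; auto. }
  exists l. split; auto.
  destruct (classic (P l)) as [Hpl|Hpl]; auto.
  destruct Hne as [p Hp].
  assert (Hpd : forall q, P q -> slt q l).
  { intros q Hq. split. apply (proj1 Hl); auto. intro E; subst; contradiction. }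
  apply (@gen_A (fun z => Aset z /\ slt z l)).
  - intros z [Hz _]; auto.
  - intros z w [Hz Hzl] Hw Hwz. split; auto. eapply slt_trans; eauto.
  - intros Hn. exfalso. apply (Hn p). split; auto.
  - intros v [Hv Hvl] Hmax. exfalso.
    assert (le l v).
    { apply (proj2 Hl). intros q Hq.
      destruct (A_chain (HP q Hq) Hv) as [H|H]; auto.
      destruct (classic (q = v)) as [->|E]; [apply refl|].
      exfalso. apply (Hmax q). split; auto. split; auto. }
    destruct Hvl as [H1 H2]. apply H2; apply antis; auto.
  - intros _ _. split.
    + intros z [_ [H _]]; auto.
    + intros u Hu. apply (proj2 Hl). intros q Hq. apply Hu. split; auto.
Qed.
End S.

Theorem mainTheorem6 (X : Type) (le : X -> X -> Prop) (f : X -> X) (a0 : X)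
    (N : X -> Prop) :
  inhabited X ->
  is_poset le ->
  strictly_inductive le ->
  (* N is the smallest subset containing a0, closed under f and under
     non-empty least upper bounds *)
  N a0 -> closed_under_f f N -> closed_under_lubs le N ->
  (forall Z : X -> Prop, Z a0 -> closed_under_f f Z -> closed_under_lubs le Z ->
     forall x, N x -> Z x) ->
  iterates_monotone le f a0 ->
  forall x, N x -> iterates_set le f a0 x.
Proof.
  intros _ Hpo Hsi _ _ _ Hmin Hmon x Hx.
  apply (Hmin (iterates_set le f a0)); auto.
  - apply (A_a0' Hpo Hmon).
  - intros z Hz. apply (A_fclosed Hpo Hmon Hz).
  - apply (A_lubclosed Hpo Hmon Hsi).
Qed.
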